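(* Let $n,p,r\ge 1$, let $A_0,A_1\in\mathbb{R}^{n\times n}$, $B\in\mathbb{R}^{n\times r}$, $C\in\mathbb{R}^{p\times n}$, and consider the second order linear discrete-time system $$x_{t+2}=A_0x_t+A_1x_{t+1}+Bu_t,\qquad x_0=a_0,\ x_1=a_1,\qquad y_t=Cx_t,\qquad t=0,1,2,\dots,$$ with states $x_t\in\mathbb{R}^n$, inputs $u_t\in\mathbb{R}^r$, outputs $y_t\in\mathbb{R}^p$ and unknown initial vectors $a_0,a_1\in\mathbb{R}^n$. Define matrices $S_k,P_k\in\mathbb{R}^{n\times n}$ by $S_0=A_0$, $P_0=A_1$ and, for $k\ge 1$, $S_k=P_{k-1}A_0$, $P_k=S_{k-1}+P_{k-1}A_1$. Let $\mathcal{O}(A_0,A_1,C)$ be the $(2np)\times(2n)$ block matrix whose block rows are, in order, $$\begin{bmatrix} C & 0_{p\times n}\end{bmatrix},\ \begin{bmatrix} 0_{p\times n} & C\end{bmatrix},\ \begin{bmatrix} CS_0 & CP_0\end{bmatrix},\ \begin{bmatrix} CS_1 & CP_1\end{bmatrix},\ \dots,\ \begin{bmatrix} CS_{2n-3} & CP_{2n-3}\end{bmatrix}.$$ Then the system is observable if and only if $\operatorname{rank}\mathcal{O}(A_0,A_1,C)=2n$.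
   Context: The system is called observable (at time $t=0$) if there exists some $t_1>0$ such that the initial state $(x_0,x_1)=(a_0,a_1)$ can be uniquely determined from the knowledge of $u_t$ and $y_t$ for $t=0,1,\dots,t_1$. Here $0_{\ell\times m}$ denotes the $\ell\times m$ zero matrix. *)

(* Defs.v *)
From HB Require Import structures.
From mathcomp Require Import all_boot all_order all_algebra.
From mathcomp Require Import reals.
Set Implicit Arguments. Unset Strict Implicit. Unset Printing Implicit Defensive.
Import Order.TTheory GRing.Theory Num.Theory.
Local Open Scope ring_scope.

Section SecondOrder.
Variables (R : realType) (n p r : nat).
Variables (A0 A1 : 'M[R]_n) (B : 'M[R]_(n, r)) (C : 'M[R]_(p, n)).

(* (x_t, x_{t+1}) for the system x_{t+2} = A0 x_t + A1 x_{t+1} + B u_t,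
   x_0 = a0, x_1 = a1. *)
Fixpoint state_pair (a0 a1 : 'cV[R]_n) (u : nat -> 'cV[R]_r) (t : nat)
  : 'cV[R]_n * 'cV[R]_n :=
  match t with
  | 0 => (a0, a1)
  | t'.+1 => let xs := state_pair a0 a1 u t' in
             (xs.2, A0 *m xs.1 + A1 *m xs.2 + B *m u t')
  end.

Definition state a0 a1 u t : 'cV[R]_n := (state_pair a0 a1 u t).1.

Definition output a0 a1 u t : 'cV[R]_p := C *m state a0 a1 u t.

Definition observable : Prop :=
  exists t1 : nat, (0 < t1)%N /\
    forall (u : nat -> 'cV[R]_r) (a0 a1 b0 b1 : 'cV[R]_n),
      (forall t, (t <= t1)%N -> output a0 a1 u t = output b0 b1 u t) ->
      a0 = b0 /\ a1 = b1.

Fixpoint SP (k : nat) : 'M[R]_n * 'M[R]_n :=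
  match k with
  | 0 => (A0, A1)
  | k'.+1 => let sp := SP k' in (sp.2 *m A0, sp.1 + sp.2 *m A1)
  end.

Definition Smx k := (SP k).1.
Definition Pmx k := (SP k).2.

Definition obs_block (k : nat) : 'M[R]_(p, n + n) :=
  match k with
  | 0 => row_mx C 0
  | 1 => row_mx 0 C
  | k'.+2 => row_mx (C *m Smx k') (C *m Pmx k')
  end.

Definition obs_mx : 'M[R]_(\sum_(k < (2 * n)%N) p, n + n) :=
  \mxcol_(k < (2 * n)%N) obs_block k.

End SecondOrder.

(* Main.v *)
Require Import Defs.
From HB Require Import structures.
From mathcomp Require Import all_boot all_order all_algebra.
From mathcomp Require Import reals.
From mathcomp Require Import zify.
Set Implicit Arguments. Unset Strict Implicit. Unset Printing Implicit Defensive.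
Import Order.TTheory GRing.Theory Num.Theory.
Local Open Scope ring_scope.

Lemma CH_kernel (R : realType) N q (M : 'M[R]_N.+1) (E : 'M[R]_(q, N.+1))
  (z : 'cV[R]_N.+1) :
  (forall k, (k < N.+1)%N -> E *m M ^+ k *m z = 0) ->
  forall k, E *m M ^+ k *m z = 0.
Proof.
move=> H.
have CH := Cayley_Hamilton M.
set P := char_poly M in CH.
have hP : M ^+ N.+1 = - \sum_(i < N.+1) P`_i *: M ^+ i.
  have lc : P`_N.+1 = 1.
    by have /monicP := char_poly_monic M; rewrite lead_coefE size_char_poly.
  rewrite -(coefK P) poly_def size_char_poly big_ord_recr /= in CH.
  rewrite rmorphD /= rmorph_sum /= linearZ /= rmorphXn /= horner_mx_X in CH.
  rewrite lc scale1r in CH.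
  have hs : \sum_(i < N.+1) horner_mx M (P`_i *: 'X^i) = \sum_(i < N.+1) P`_i *: M ^+ i.
    by apply: eq_bigr => i _; rewrite linearZ /= rmorphXn /= horner_mx_X.
  rewrite hs in CH.
  by apply/eqP; rewrite -addr_eq0; apply/eqP; rewrite -[RHS]CH addrC.
elim/ltn_ind => k IH.
case: (ltnP k N.+1) => hk; first exact: H.
have -> : M ^+ k = - \sum_(i < N.+1) P`_i *: M ^+ (k - N.+1 + i).
  rewrite -{1}(subnK hk) exprD hP mulrN mulr_sumr; congr (- _).
  by apply: eq_bigr => i _; rewrite -scalerAr -exprD.
rewrite mulmxN mulNmx mulmx_sumr mulmx_suml big1 ?oppr0 // => i _.
rewrite -scalemxAr -scalemxAl IH ?scaler0 //.
have := ltn_ord i; lia.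
Qed.

Lemma CH_kernel' (R : realType) N q (M : 'M[R]_N) (E : 'M[R]_(q, N))
  (z : 'cV[R]_N) : (0 < N)%N ->
  (forall k, (k < N)%N -> E *m M ^+ k *m z = 0) ->
  forall k, E *m M ^+ k *m z = 0.
Proof. by case: N M E z => [//|N] M E z _; exact: CH_kernel. Qed.

Definition Mbig (R : realType) n (A0 A1 : 'M[R]_n) : 'M[R]_(n + n) :=
  block_mx 0 1%:M A0 A1.

Lemma pow_F (R : realType) n (A0 A1 : 'M[R]_n) k :
  row_mx (1%:M : 'M[R]_n) 0 *m (Mbig A0 A1) ^+ k.+2 =
  row_mx (Smx A0 A1 k) (Pmx A0 A1 k).
Proof.
elim: k => [|k IH].
  rewrite !exprS expr0 mulr1 -!mulmxE mulmxA /Mbig !mul_row_block.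
  by rewrite !mulmx0 !mul1mx !mul0mx !addr0 !add0r !mul1mx !mul0mx !add0r.
rewrite exprSr -mulmxE mulmxA IH /Mbig mul_row_block !mulmx0 mulmx1 add0r.
by [].
Qed.

Lemma obs_block_pow (R : realType) n p (A0 A1 : 'M[R]_n) (C : 'M[R]_(p, n)) k :
  obs_block A0 A1 C k = row_mx C 0 *m (Mbig A0 A1) ^+ k.
Proof.
case: k => [|[|k]].
- by rewrite expr0 -idmxE mulmx1.
- by rewrite expr1 /Mbig mul_row_block !mulmx0 !mul0mx mulmx1 !addr0.
have -> : row_mx C 0 = C *m row_mx (1%:M : 'M_n) (0 : 'M_n) by rewrite mul_mx_row mulmx1 mulmx0.
by rewrite -mulmxA pow_F mul_mx_row.
Qed.

Lemma state_diff (R : realType) n r (A0 A1 : 'M[R]_n) (B : 'M[R]_(n, r)) u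
  a0 a1 b0 b1 t :
  col_mx (state_pair A0 A1 B a0 a1 u t).1 (state_pair A0 A1 B a0 a1 u t).2 -
  col_mx (state_pair A0 A1 B b0 b1 u t).1 (state_pair A0 A1 B b0 b1 u t).2 =
  (Mbig A0 A1) ^+ t *m col_mx (a0 - b0) (a1 - b1).
Proof.
elim: t => [|t IH].
  by rewrite expr0 -idmxE mul1mx /= opp_col_mx add_col_mx.
rewrite exprS -mulmxE -mulmxA -IH /=.
rewrite !opp_col_mx !add_col_mx /Mbig mul_block_col mul0mx mul1mx add0r !mulmxBr.
congr col_mx.
by rewrite opprD addrACA subrr addr0 opprD addrACA.
Qed.

Lemma output_diff (R : realType) n p r (A0 A1 : 'M[R]_n) (B : 'M[R]_(n, r))
  (C : 'M[R]_(p, n)) u a0 a1 b0 b1 t :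
  output A0 A1 B C a0 a1 u t - output A0 A1 B C b0 b1 u t =
  row_mx C 0 *m (Mbig A0 A1) ^+ t *m col_mx (a0 - b0) (a1 - b1).
Proof.
rewrite /output /state -mulmxBr -mulmxA -(state_diff A0 A1 B u).
by rewrite opp_col_mx add_col_mx mul_row_col mul0mx addr0.
Qed.

Lemma obs_ker (R : realType) n p (A0 A1 : 'M[R]_n) (C : 'M[R]_(p, n)) (z : 'cV[R]_(n + n)) :
  obs_mx A0 A1 C *m z = 0 <->
  forall k, (k < 2 * n)%N -> row_mx C 0 *m (Mbig A0 A1) ^+ k *m z = 0.
Proof.
rewrite /obs_mx mxcol_mul; split.
  move=> h k hk.
  have := congr1 (fun X => submxcol X (Ordinal hk)) h.
  by rewrite /= mxcolK submxcol0 obs_block_pow.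
move=> h; apply/mxcolP => i; rewrite mxcolK submxcol0 obs_block_pow.
exact: h _ (ltn_ord i).
Qed.

Theorem theorem2p1 (R : realType) (n p r : nat)
  (hn : (1 <= n)%N) (hp : (1 <= p)%N) (hr : (1 <= r)%N)
  (A0 A1 : 'M[R]_n) (B : 'M[R]_(n, r)) (C : 'M[R]_(p, n)) :
  observable A0 A1 B C <-> \rank (obs_mx A0 A1 C) = (2 * n)%N.
Proof.
split.
- case=> t1 [t1pos Hobs].
  have key : forall z : 'cV[R]_(n + n), obs_mx A0 A1 C *m z = 0 -> z = 0.
    move=> z /obs_ker hz.
    have hall : forall k, row_mx C 0 *m (Mbig A0 A1) ^+ k *m z = 0.
      apply: CH_kernel'; first by lia.
      by move=> k hk; apply: hz; lia.
    have [h0 h1] : usubmx z = 0 /\ dsubmx z = 0.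
      apply: (Hobs (fun _ => 0)).
      move=> t _; apply/eqP; rewrite -subr_eq0; apply/eqP.
      by rewrite (output_diff A0 A1 B C) !subr0 vsubmxK; exact: hall.
    by rewrite -[z]vsubmxK h0 h1 col_mx0.
  have rf : row_free (obs_mx A0 A1 C)^T.
    rewrite -kermx_eq0; apply/eqP/row_matrixP => i; rewrite row0.
    set w := row i (kermx _).
    have hw : w *m (obs_mx A0 A1 C)^T = 0 by rewrite /w -row_mul mulmx_ker row0.
    have := key w^T.
    rewrite -[obs_mx A0 A1 C]trmxK -trmx_mul hw trmx0 => /(_ erefl).
    by move/(congr1 trmx); rewrite trmxK trmx0.
  move: rf; rewrite /row_free mxrank_tr => /eqP ->; lia.
- move=> hrank; exists (2 * n).-1; split; first by lia.
  move=> u a0 a1 b0 b1 h.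
  have hd : obs_mx A0 A1 C *m col_mx (a0 - b0) (a1 - b1) = 0.
    apply/obs_ker => k hk; rewrite -(output_diff A0 A1 B C u).
    by apply/eqP; rewrite subr_eq0; apply/eqP; apply: h; lia.
  have rf : row_free (obs_mx A0 A1 C)^T.
    by rewrite /row_free mxrank_tr hrank; apply/eqP; lia.
  have : (col_mx (a0 - b0) (a1 - b1))^T *m (obs_mx A0 A1 C)^T = 0.
    by rewrite -trmx_mul hd trmx0.
  move/eqP; rewrite mulmx_free_eq0 // => /eqP /(congr1 trmx).
  rewrite trmxK trmx0 => /eqP.
  by rewrite col_mx_eq0 !subr_eq0 => /andP [/eqP -> /eqP ->].
Qed.
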